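(* Let $a_2,a_5$ be real constants, not both zero, and $k_1,k_2,k_3$ real constants. On the region where $r=\sqrt{x^2+y^2}>0$ and $a_2y-a_5x\neq0$, let $$V=\frac{k_1}{(a_2y-a_5x)^2}+\frac{k_2}{r}+\frac{k_3(a_2x+a_5y)}{r(a_2y-a_5x)^2}.$$ With $L=x\dot y-y\dot x$, the function $$J=(a_2\dot x+a_5\dot y)L^2+\frac{2k_1r^2}{(a_2y-a_5x)^2}(a_2\dot x+a_5\dot y)-\frac{k_2(a_2y-a_5x)}{r}L+\frac{k_3r}{a_2y-a_5x}(a_2\dot y-a_5\dot x)-\frac{k_3(a_2x+a_5y)}{r(a_2y-a_5x)}L+\frac{2k_3(a_2x+a_5y)r}{(a_2y-a_5x)^2}(a_2\dot x+a_5\dot y)$$ is a first integral of $\ddot x=-V_{,x}$, $\ddot y=-V_{,y}$.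
   Context: A first integral is a function of $(t,x,y,\dot x,\dot y)$ whose total time derivative vanishes along every solution of the given equations of motion. *)

(* Defs.v *)
From Stdlib Require Import Reals.
From Coquelicot Require Import Coquelicot.
Open Scope R_scope.

Definition rad (x y : R) : R := sqrt (x ^ 2 + y ^ 2).

Definition Vpot (a2 a5 k1 k2 k3 : R) (x y : R) : R :=
  k1 / (a2 * y - a5 * x) ^ 2 + k2 / rad x y
  + k3 * (a2 * x + a5 * y) / (rad x y * (a2 * y - a5 * x) ^ 2).

Definition Vx (a2 a5 k1 k2 k3 : R) (x y : R) : R :=
  Derive (fun u => Vpot a2 a5 k1 k2 k3 u y) x.
Definition Vy (a2 a5 k1 k2 k3 : R) (x y : R) : R :=
  Derive (fun u => Vpot a2 a5 k1 k2 k3 x u) y.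

Definition Jint (a2 a5 k1 k2 k3 : R) (x y xd yd : R) : R :=
  let r := rad x y in
  let L := x * yd - y * xd in
  let w := a2 * y - a5 * x in
  let u := a2 * x + a5 * y in
  (a2 * xd + a5 * yd) * L ^ 2
  + 2 * k1 * r ^ 2 / w ^ 2 * (a2 * xd + a5 * yd)
  - k2 * w / r * L
  + k3 * r / w * (a2 * yd - a5 * xd)
  - k3 * u / (r * w) * L
  + 2 * k3 * u * r / w ^ 2 * (a2 * xd + a5 * yd).

(* Main.v *)
Require Import Defs.
From Stdlib Require Import Reals Lra Nsatz.
From Coquelicot Require Import Coquelicot.
Open Scope R_scope.

Ltac nz := match goal with
  | |- _ * _ <> 0 => apply Rmult_integral_contrapositive_currified; nz
  | |- 1 <> 0 => exact R1_neq_R0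
  | H : ?a <> 0 |- ?b <> 0 => exact H
  | |- _ => lra
  end.

Lemma Vx_eq a2 a5 k1 k2 k3 x y : 0 < rad x y -> a2 * y - a5 * x <> 0 ->
  Vx a2 a5 k1 k2 k3 x y =
  let r := rad x y in let w := a2 * y - a5 * x in let u := a2 * x + a5 * y in
  2 * a5 * k1 / w ^ 3 - k2 * x / r ^ 3
  + k3 * (a2 / (r * w ^ 2) - u * x / (r ^ 3 * w ^ 2) + 2 * a5 * u / (r * w ^ 3)).
Proof.
  intros Hr Hw. unfold Vx. apply is_derive_unique.
  unfold Vpot, rad in *.
  assert (Hq : 0 < x ^ 2 + y ^ 2).
  { destruct (Rle_lt_dec (x^2+y^2) 0) as [h|h]; auto.
    rewrite sqrt_neg_0 in Hr; lra. }
  auto_derive.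
  all: replace (x * (x * 1) + y * (y * 1)) with (x^2+y^2) by ring.
  all: set (s := sqrt (x^2+y^2)) in *.
  all: cbv zeta.
  all: try (repeat split; auto; field; lra).
  all: repeat split; auto; nz.
Qed.

Lemma Vy_eq a2 a5 k1 k2 k3 x y : 0 < rad x y -> a2 * y - a5 * x <> 0 ->
  Vy a2 a5 k1 k2 k3 x y =
  let r := rad x y in let w := a2 * y - a5 * x in let u := a2 * x + a5 * y in
  - 2 * a2 * k1 / w ^ 3 - k2 * y / r ^ 3
  + k3 * (a5 / (r * w ^ 2) - u * y / (r ^ 3 * w ^ 2) - 2 * a2 * u / (r * w ^ 3)).
Proof.
  intros Hr Hw. unfold Vy. apply is_derive_unique.
  unfold Vpot, rad in *.
  assert (Hq : 0 < x ^ 2 + y ^ 2).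
  { destruct (Rle_lt_dec (x^2+y^2) 0) as [h|h]; auto.
    rewrite sqrt_neg_0 in Hr; lra. }
  auto_derive.
  all: replace (x * (x * 1) + y * (y * 1)) with (x^2+y^2) by ring.
  all: set (s := sqrt (x^2+y^2)) in *.
  all: cbv zeta.
  all: try (repeat split; auto; field; lra).
  all: repeat split; auto; nz.
Qed.

Theorem mainTheorem7 (a2 a5 k1 k2 k3 : R) (ta tb : R)
  (x y vx vy : R -> R) :
  (a2 <> 0 \/ a5 <> 0) ->
  (forall t, ta < t < tb ->
     0 < rad (x t) (y t) /\ a2 * y t - a5 * x t <> 0) ->
  (forall t, ta < t < tb ->
     is_derive x t (vx t) /\ is_derive y t (vy t) /\
     is_derive vx t (- Vx a2 a5 k1 k2 k3 (x t) (y t)) /\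
     is_derive vy t (- Vy a2 a5 k1 k2 k3 (x t) (y t))) ->
  forall t, ta < t < tb ->
    is_derive (fun s => Jint a2 a5 k1 k2 k3 (x s) (y s) (vx s) (vy s)) t 0.
Proof.
  intros _ Hreg Hder t Ht.
  destruct (Hreg t Ht) as [Hr Hw].
  destruct (Hder t Ht) as (Dx & Dy & Dvx & Dvy).
  rewrite (Vx_eq _ _ _ _ _ _ _ Hr Hw) in Dvx.
  rewrite (Vy_eq _ _ _ _ _ _ _ Hr Hw) in Dvy.
  unfold Jint, rad in *. cbv zeta in *.
  assert (Hq : 0 < x t ^ 2 + y t ^ 2).
  { destruct (Rle_lt_dec (x t^2+y t^2) 0) as [h|h]; auto.
    rewrite sqrt_neg_0 in Hr; lra. }
  auto_derive.
  { replace (x t * (x t * 1) + y t * (y t * 1)) with (x t ^2 + y t^2) by ring.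
    repeat split; auto; try (eexists; eassumption); nz. }
  repeat match goal with |- context[Derive ?f t] =>
    let E := fresh in
    first [ assert (E : Derive f t = vx t) by (apply is_derive_unique; exact Dx)
          | assert (E : Derive f t = vy t) by (apply is_derive_unique; exact Dy)
          | assert (E : Derive f t = _) by (apply is_derive_unique; exact Dvx)
          | assert (E : Derive f t = _) by (apply is_derive_unique; exact Dvy) ];
    rewrite E; clear E end.
  replace (x t * (x t * 1) + y t * (y t * 1)) with (x t ^2 + y t^2) by ring.
  assert (Hs : sqrt (x t ^ 2 + y t ^ 2) ^ 2 = x t ^ 2 + y t ^ 2).
  { rewrite <- Rsqr_pow2. apply Rsqr_sqrt. lra. }
  set (s := sqrt (x t ^ 2 + y t ^ 2)) in *.
  set (X := x t) in *. set (Y := y t) in *. set (U := vx t) in *. set (W := vy t) in *.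
  clearbody s X Y U W. clear Hreg Hder Dx Dy Dvx Dvy.
  field_simplify; [ | nz ..].
  unfold Rdiv; apply Rmult_eq_0_compat_r.
  set (q := X ^ 2 + Y ^ 2) in *.
  assert (H3 : s ^ 3 = q * s) by (rewrite <- Hs; ring).
  assert (H4 : s ^ 4 = q * q) by (rewrite <- Hs; ring).
  assert (H5 : s ^ 5 = q * q * s) by (rewrite <- Hs; ring).
  assert (H6 : s ^ 6 = q * q * q) by (rewrite <- Hs; ring).
  assert (H7 : s ^ 7 = q * q * q * s) by (rewrite <- Hs; ring).
  assert (H8 : s ^ 8 = q * q * q * q) by (rewrite <- Hs; ring).
  rewrite ?H8, ?H7, ?H6, ?H5, ?H4, ?H3, ?Hs.
  unfold q. Time ring.
Qed.
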